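(* As $n\to\infty$ the polynomials $K_n(q,t)$ converge coefficientwise to a formal power series $K(q,t)$, and $$K(q,t)=\sum_{p=0}^{\infty}q^{2p^2}t^{2p(p-1)}\left(1+q^{8p+12}t^{8p+5}\right)\prod_{j=1}^{p}\frac{1+q^{2j+4}t^{2j+1}}{1-q^{2j}t^{2j}}.$$
   Context: For $n\ge1$, call a sequence $(s_0,\dots,s_{n-1})\in\{0,1\}^n$ (positions numbered from 0) admissible if every maximal block of consecutive 1's has length 1 or 2, except that a maximal block of length 3 is allowed if it starts at position 0. The weight of an admissible sequence is the product over its maximal blocks of 1's of: $q^{2k+2}t^{2k}$ for a block of length 1 at position $k$; $q^{2k+8}t^{2k+3}$ for a block of length 2 starting at position $k$; $q^{12}t^5$ for the block of length 3 at positions $0,1,2$. $K_n(q,t)$ is the sum of the weights of all admissible sequences of length $n$. *)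

(* Defs.v *)
(* Bivariate formal power series in q,t over int are
   represented by their coefficient functions: F a b = coeff of q^a t^b. *)
From HB Require Import structures.
From mathcomp Require Import all_boot all_order all_algebra.
Set Implicit Arguments. Unset Strict Implicit. Unset Printing Implicit Defensive.
Import Order.TTheory GRing.Theory Num.Theory.
Local Open Scope ring_scope.

Definition series := nat -> nat -> int.

Definition szero : series := fun _ _ => 0.
Definition sone : series := fun a b => ((a == 0%N) && (b == 0%N))%:R.
Definition smono (c d : nat) : series := fun a b => ((a == c) && (b == d))%:R.
Definition sadd (F G : series) : series := fun a b => F a b + G a b.
Definition smul (F G : series) : series :=
  fun a b => \sum_(i < a.+1) \sum_(j < b.+1) F i j * G (a - i)%N (b - j)%N.
(* 1/(1 - q^c t^d) = sum_k q^(c k) t^(d k), for c >= 1 (only used with c >= 2) *)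
Definition sgeom (c d : nat) : series :=
  fun a b => [exists k : 'I_a.+1, (a == c * k)%N && (b == d * k)%N]%:R.

Definition coef_conv (F : nat -> series) (G : series) : Prop :=
  forall a b : nat, exists N : nat, forall n : nat, (N <= n)%N -> F n a b = G a b.

(* maximal blocks of 1's of s (positions numbered from i), as (start, length) *)
Fixpoint blocks_aux (s : seq bool) (i : nat) : seq (nat * nat) :=
  match s with
  | [::] => [::]
  | true :: s' =>
      match blocks_aux s' i.+1 with
      | (j, l) :: r => if j == i.+1 then (i, l.+1) :: r else (i, 1%N) :: (j, l) :: r
      | [::] => [:: (i, 1%N)]
      end
  | false :: s' => blocks_aux s' i.+1
  end.

Definition blocks (s : seq bool) : seq (nat * nat) := blocks_aux s 0.

Definition admissible_block (kl : nat * nat) : bool :=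
  [|| kl.2 == 1%N, kl.2 == 2%N | (kl.2 == 3%N) && (kl.1 == 0%N)].

Definition admissible (s : seq bool) : bool := all admissible_block (blocks s).

(* exponents (of q, of t) of the weight of a block *)
Definition block_wexp (kl : nat * nat) : nat * nat :=
  let: (k, l) := kl in
  if l == 1%N then ((2 * k + 2)%N, (2 * k)%N)
  else if l == 2%N then ((2 * k + 8)%N, (2 * k + 3)%N)
  else (12%N, 5%N).

Definition wexp (s : seq bool) : nat * nat :=
  (\sum_(kl <- blocks s) (block_wexp kl).1, \sum_(kl <- blocks s) (block_wexp kl).2)%N.

Definition Kn (n : nat) : series :=
  fun a b => (#|[set s : n.-tuple bool | admissible s && (wexp s == (a, b))]|)%:Z.

Definition Kterm (p : nat) : series :=
  smul (smono (2 * p ^ 2) (2 * p * (p - 1)))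
    (smul (sadd sone (smono (8 * p + 12) (8 * p + 5)))
       (\big[smul/sone]_(1 <= j < p.+1)
           smul (sadd sone (smono (2 * j + 4) (2 * j + 1))) (sgeom (2 * j) (2 * j)))).

Definition Kpartial (P : nat) : series := \big[sadd/szero]_(p < P) Kterm p.

(* Main.v *)
Require Import Defs.
From HB Require Import structures.
From mathcomp Require Import all_boot all_order all_algebra.
From mathcomp Require Import zify.
From Stdlib Require Import FunctionalExtensionality.
Set Implicit Arguments. Unset Strict Implicit. Unset Printing Implicit Defensive.
Import Order.TTheory GRing.Theory Num.Theory.
Local Open Scope ring_scope.

Definition tr (N : nat) (F : series) : {poly {poly int}} :=
  \poly_(i < N) \poly_(j < N) F i j.

Lemma coef_tr N F i j : (tr N F)`_i`_j = if ((i < N) && (j < N))%N then F i j else 0.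
Proof.
rewrite /tr coef_poly; case: (i < N)%N => /=; last by rewrite coef0.
by rewrite coef_poly.
Qed.

Lemma coefMM (P Q : {poly {poly int}}) a b :
  (P * Q)`_a`_b = \sum_(i < a.+1) \sum_(j < b.+1) P`_i`_j * Q`_(a - i)`_(b - j).
Proof.
rewrite coefM coef_sum; apply: eq_bigr => i _; by rewrite coefM.
Qed.

Lemma smul_tr N F G a b : (a < N)%N -> (b < N)%N ->
  smul F G a b = (tr N F * tr N G)`_a`_b.
Proof.
move=> ha hb; rewrite coefMM /smul; apply: eq_bigr => i _; apply: eq_bigr => j _.
have hi : (i < N)%N by apply: leq_ltn_trans ha; rewrite -ltnS.
have hj : (j < N)%N by apply: leq_ltn_trans hb; rewrite -ltnS.
have hi' : (a - i < N)%N by apply: leq_ltn_trans ha; apply: leq_subr.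
have hj' : (b - j < N)%N by apply: leq_ltn_trans hb; apply: leq_subr.
by rewrite !coef_tr hi hj hi' hj'.
Qed.

Lemma coefMM_l (P P' Q : {poly {poly int}}) a b :
  (forall i j, (i <= a)%N -> (j <= b)%N -> P`_i`_j = P'`_i`_j) ->
  (P * Q)`_a`_b = (P' * Q)`_a`_b.
Proof.
move=> h; rewrite !coefMM; apply: eq_bigr => i _; apply: eq_bigr => j _.
by rewrite h // -ltnS.
Qed.

Lemma coefMM_r (P Q Q' : {poly {poly int}}) a b :
  (forall i j, (i <= a)%N -> (j <= b)%N -> Q`_i`_j = Q'`_i`_j) ->
  (P * Q)`_a`_b = (P * Q')`_a`_b.
Proof. by move=> h; rewrite mulrC (coefMM_l _ h) mulrC. Qed.

Lemma smulC F G : smul F G = smul G F.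
Proof.
apply: functional_extensionality => a; apply: functional_extensionality => b.
rewrite !(smul_tr (N := (maxn a b).+1)) ?ltnS ?leq_maxl ?leq_maxr //.
by rewrite mulrC.
Qed.

Lemma smulA F G H : smul F (smul G H) = smul (smul F G) H.
Proof.
apply: functional_extensionality => a; apply: functional_extensionality => b.
set N := (maxn a b).+1.
have ha : (a < N)%N by rewrite ltnS leq_maxl.
have hb : (b < N)%N by rewrite ltnS leq_maxr.
have key : forall X Y i j, (i <= a)%N -> (j <= b)%N ->
    (tr N (smul X Y))`_i`_j = (tr N X * tr N Y)`_i`_j.
  move=> X Y i j hi hj; rewrite coef_tr (leq_ltn_trans hi ha) (leq_ltn_trans hj hb).
  by apply: smul_tr; [apply: leq_ltn_trans hi ha | apply: leq_ltn_trans hj hb].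
rewrite (@smul_tr N F (smul G H) a b ha hb) (@smul_tr N (smul F G) H a b ha hb).
rewrite (@coefMM_r _ _ (tr N G * tr N H)); last by move=> i j; apply: key.
rewrite [RHS](@coefMM_l _ (tr N F * tr N G)); last by move=> i j; apply: key.
by rewrite mulrA.
Qed.

Lemma tr_sone N : (0 < N)%N -> tr N sone = 1.
Proof.
move=> hN; apply/polyP => i; apply/polyP => j.
rewrite coef_tr coef1 /sone; case: i => [|i] /=; last first.
  by rewrite coef0; case: ifP.
rewrite coef1 /=; case: j => [|j] /=; first by rewrite hN.
by case: ifP.
Qed.

Lemma smul1s F : smul sone F = F.
Proof.
apply: functional_extensionality => a; apply: functional_extensionality => b.
set N := (maxn a b).+1.
have ha : (a < N)%N by rewrite ltnS leq_maxl.
have hb : (b < N)%N by rewrite ltnS leq_maxr.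
by rewrite (@smul_tr N _ _ _ _ ha hb) tr_sone // mul1r coef_tr ha hb.
Qed.

HB.instance Definition _ := Monoid.isComLaw.Build series sone smul smulA smulC smul1s.

Lemma smulDr F G H : smul F (sadd G H) = sadd (smul F G) (smul F H).
Proof.
apply: functional_extensionality => a; apply: functional_extensionality => b.
rewrite /smul /sadd -big_split /=; apply: eq_bigr => i _.
rewrite -big_split /=; apply: eq_bigr => j _; by rewrite mulrDr.
Qed.

Lemma smulDl F G H : smul (sadd G H) F = sadd (smul G F) (smul H F).
Proof. by rewrite smulC smulDr !(smulC F). Qed.

Lemma smuls1 F : smul F sone = F.
Proof. by rewrite smulC smul1s. Qed.

Definition sh (c d : nat) (F : series) : series :=
  fun a b => if ((c <= a) && (d <= b))%N then F (a - c)%N (b - d)%N else 0.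

Lemma sum_ord_eq (n c : nat) (X : nat -> int) :
  \sum_(i < n) ((i == c :> nat)%:R * X i) = if (c < n)%N then X c else 0.
Proof.
case: ltnP => h.
  rewrite (bigD1 (Ordinal h)) //= eqxx mul1r big1 ?addr0 // => i hi.
  have -> : (i == c :> nat) = false.
    apply/negbTE; apply: contra hi => /eqP e; apply/eqP; exact: val_inj.
  by rewrite mul0r.
rewrite big1 // => i _.
have -> : (i == c :> nat) = false.
  by apply/negbTE; rewrite neq_ltn (leq_trans (ltn_ord i) h).
by rewrite mul0r.
Qed.

Lemma smul_mono c d F : smul (smono c d) F = sh c d F.
Proof.
apply: functional_extensionality => a; apply: functional_extensionality => b.
rewrite /smul /smono /sh.
rewrite (eq_bigr (fun i : 'I_a.+1 => (i == c :> nat)%:R *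
   \sum_(j < b.+1) ((j == d :> nat)%:R * F (a - i)%N (b - j)%N))); last first.
  move=> i _; rewrite mulr_sumr; apply: eq_bigr => j _.
  by rewrite -mulnb natrM mulrA.
rewrite (sum_ord_eq _ _ (fun i : nat => \sum_(j < b.+1) ((j == d :> nat)%:R * F (a - i)%N (b - j)%N))).
rewrite !ltnS; case: (c <= a)%N => //.
by rewrite (sum_ord_eq _ _ (fun j : nat => F (a - c)%N (b - j)%N)) ltnS.
Qed.

Lemma smono_mul c d c' d' : smul (smono c d) (smono c' d') = smono (c + c') (d + d').
Proof.
rewrite smul_mono.
apply: functional_extensionality => a; apply: functional_extensionality => b.
rewrite /sh /smono.
case: (leqP c a) => ha; case: (leqP d b) => hb /=.
- have -> : ((a - c == c') && (b - d == d'))%N = ((a == c + c') && (b == d + d'))%N.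
    by apply/idP/idP => /andP [/eqP e1 /eqP e2]; apply/andP; split; apply/eqP; lia.
  by [].
- have -> : ((a == c + c') && (b == d + d'))%N = false.
    by apply/negbTE/negP => /andP [_ /eqP e]; lia.
  by [].
- have -> : ((a == c + c') && (b == d + d'))%N = false.
    by apply/negbTE/negP => /andP [/eqP e _]; lia.
  by [].
- have -> : ((a == c + c') && (b == d + d'))%N = false.
    by apply/negbTE/negP => /andP [/eqP e _]; lia.
  by [].
Qed.

Lemma sh_smul c d F G : smul (sh c d F) G = sh c d (smul F G).
Proof. by rewrite -!smul_mono smulA. Qed.

Lemma geomE c a b : (0 < c)%N ->
  [exists k : 'I_a.+1, (a == c * k) && (b == c * k)]%N = ((a == b) && (c %| a))%N.
Proof.
move=> hc; apply/existsP/andP.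
  by case=> k /andP [/eqP e1 /eqP e2]; split; [rewrite e1 e2 | rewrite e1 dvdn_mulr].
case=> /eqP e hd.
have hk : (a %/ c < a.+1)%N by rewrite ltnS leq_div.
exists (Ordinal hk) => /=; rewrite -e mulnC divnK // eqxx; done.
Qed.

Lemma sgeom_rec c : (0 < c)%N -> sgeom c c = sadd sone (sh c c (sgeom c c)).
Proof.
move=> hc; apply: functional_extensionality => a; apply: functional_extensionality => b.
rewrite /sadd /sone /sh /sgeom !geomE //.
case: a => [|a].
  have -> : (c <= 0)%N = false by apply/negbTE; rewrite -ltnNge.
  rewrite dvdn0 andbT eqxx /= addr0.
  by case: b.
rewrite /= add0r.
case: (leqP c a.+1) => ha; case: (leqP c b) => hb /=.
- by rewrite (dvdn_subl ha (dvdnn c)); congr (_ && _)%:R; apply/eqP/eqP; lia.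
- have -> : (a.+1 == b) = false by apply/negbTE/eqP; lia.
  by [].
- case: (a.+1 =P b) => e //=.
  by case: (c %| a.+1)%N / idP => // /(dvdn_leq (ltn0Sn a)) h; lia.
- case: (a.+1 =P b) => e //=.
  by case: (c %| a.+1)%N / idP => // /(dvdn_leq (ltn0Sn a)) h; lia.
Qed.

Definition fac (j : nat) : series :=
  smul (sadd sone (smono (2 * j + 4) (2 * j + 1))) (sgeom (2 * j) (2 * j)).
Definition Pp (p : nat) : series := \big[smul/sone]_(1 <= j < p.+1) fac j.
Definition Tp (p : nat) : series := smul (smono (2 * p ^ 2) (2 * p * (p - 1))) (Pp p).

Lemma Kterm_eq p : Kterm p = sadd (Tp p) (sh (8 * p + 12) (8 * p + 5) (Tp p)).
Proof.
rewrite /Kterm -/(Pp p) smulDl smul1s smulDr -/(Tp p).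
by rewrite smulA (smulC (smono _ _) (smono _ _)) -smulA -/(Tp p) smul_mono.
Qed.

Lemma Pp_rec p : Pp p.+1 = sadd (sadd (Pp p) (sh (2 * p + 6) (2 * p + 3) (Pp p)))
   (sh (2 * p + 2) (2 * p + 2) (Pp p.+1)).
Proof.
have e : Pp p.+1 = smul (Pp p) (fac p.+1) by rewrite /Pp big_nat_recr.
have -> : (2 * p + 6 = 2 * p.+1 + 4)%N by lia.
have -> : (2 * p + 3 = 2 * p.+1 + 1)%N by lia.
have -> : (2 * p + 2 = 2 * p.+1)%N by lia.
rewrite -!smul_mono.
rewrite {1}e /fac.
set M := smono (2 * p.+1 + 4) _; set m := smono (2 * p.+1) _.
set G := sgeom _ _.
rewrite {1}/G sgeom_rec; last by lia.
rewrite -/G -smul_mono -/m.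
rewrite !smulDr !smuls1 smulDr smuls1 (smulC (Pp p) M).
congr sadd.
rewrite e /fac -/M -/G.
rewrite (smulA (sadd sone M) m G) (smulC (sadd sone M) m) -smulA.
by rewrite smulA (smulC (Pp p) m) -smulA.
Qed.

Lemma Tp_rec p : Tp p.+1 = sadd (sadd (sh (4 * p + 2) (4 * p) (Tp p))
   (sh (6 * p + 8) (6 * p + 3) (Tp p))) (sh (2 * p + 2) (2 * p + 2) (Tp p.+1)).
Proof.
have eN : smono (2 * p.+1 ^ 2) (2 * p.+1 * (p.+1 - 1)) =
   smul (smono (4 * p + 2) (4 * p)) (smono (2 * p ^ 2) (2 * p * (p - 1))).
  rewrite smono_mul; congr smono; rewrite ?expnS ?expn0 ?muln1; case: p => [|p] //=; nia.
have eM : smono (6 * p + 8) (6 * p + 3) =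
   smul (smono (4 * p + 2) (4 * p)) (smono (2 * p + 6) (2 * p + 3)).
  by rewrite smono_mul; congr smono; lia.
rewrite -!smul_mono eM.
rewrite {1}/Tp Pp_rec -!smul_mono eN !smulDr.
rewrite -/(Tp p.+1).
congr sadd; first congr sadd.
- by rewrite -smulA.
- rewrite -!smulA; congr smul.
  by rewrite smulA (smulC (smono (2 * p ^ 2) _)) -smulA.
- rewrite -eN smulA (smulC _ (smono (2 * p + 2) _)) -smulA.
  by rewrite -/(Tp p.+1).
Qed.

Local Close Scope ring_scope.

Fixpoint bseqs (n : nat) : seq (seq bool) :=
  if n is n'.+1 then [seq false :: s | s <- bseqs n'] ++ [seq true :: s | s <- bseqs n']
  else [:: [::]].

Lemma mem_bseqs n x : (x \in bseqs n) = (size x == n).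
Proof.
elim: n x => [|n IH] x; first by case: x.
case: x => [|c x].
  by rewrite mem_cat; apply/negbTE; rewrite negb_or; apply/andP; split;
    apply/mapP => [[y _ e]].
rewrite mem_cat; case: c.
  rewrite (negbTE (_ : true :: x \notin _)); last first.
    by apply/mapP => [[y _ e]].
  have inj : injective (cons true) by move=> u v [].
  by rewrite /= (mem_map inj) IH.
rewrite orbC (negbTE (_ : false :: x \notin _)); last first.
  by apply/mapP => [[y _ e]].
have inj : injective (cons false) by move=> u v [].
by rewrite /= (mem_map inj) IH.
Qed.

Lemma uniq_bseqs n : uniq (bseqs n).
Proof.
elim: n => [|n IH] //=; rewrite cat_uniq.
rewrite !map_inj_uniq ?IH //; try by move=> a b [].
rewrite andbT /=; apply/hasPn => x /mapP [y _ ->]; apply/mapP => [[z _ e]]; congruence.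
Qed.

Lemma card_count n (P : pred (seq bool)) :
  #|[set s : n.-tuple bool | P s]| = count P (bseqs n).
Proof.
rewrite cardsE cardE /enum_mem size_filter.
rewrite -(count_map (@tval n bool)).
apply/permP; apply: uniq_perm.
- rewrite map_inj_uniq; [rewrite -enumT; exact: enum_uniq | exact: val_inj].
- exact: uniq_bseqs.
move=> x; rewrite mem_bseqs; apply/mapP/idP.
  by case=> t _ ->; rewrite size_tuple.
move=> /eqP h; exists (Tuple (introT eqP h)) => //.
by rewrite -enumT mem_enum.
Qed.

Lemma Kn_count n a b :
  Kn n a b = ((count (fun s => admissible s && (wexp s == (a, b))) (bseqs n))%:Z)%R.
Proof. by rewrite /Kn (card_count n (fun s => admissible s && (wexp s == (a, b)))). Qed.

Definition shk (k : nat) (kl : nat * nat) : nat * nat := ((kl.1 + k)%N, kl.2).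

Lemma blocks_shift s i k : blocks_aux s (i + k) = map (shk k) (blocks_aux s i).
Proof.
elim: s i => [|[] s IH] i //=.
  rewrite -[blocks_aux s _]/(blocks_aux s (i.+1 + k)) IH.
  case: (blocks_aux s i.+1) => [|[j l] r] //=.
  rewrite /shk /=.
  have -> : (j + k == S (i + k)) = (j == i.+1) by apply/eqP/eqP; lia.
  by case: ifP.
by rewrite -[blocks_aux s _]/(blocks_aux s (i.+1 + k)) IH.
Qed.

Lemma blocks_sh s k : blocks_aux s k = map (shk k) (blocks s).
Proof. by rewrite -(blocks_shift s 0 k) add0n. Qed.

Lemma blocks_tf s i : blocks_aux [:: true, false & s] i = (i, 1%N) :: blocks_aux s i.+2.
Proof.
rewrite /= blocks_sh.
case: (blocks s) => [|[j l] r] //=.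
rewrite /shk /=.
have -> : (j + i.+2 == i.+1)%N = false by apply/negbTE; lia.
by [].
Qed.

Lemma blocks_ttf s i :
  blocks_aux [:: true, true, false & s] i = (i, 2%N) :: blocks_aux s i.+3.
Proof.
have h := blocks_tf s i.+1.
change (match blocks_aux [:: true, false & s] i.+1 with
  | [::] => [:: (i, 1%N)]
  | (j, l) :: r => if j == i.+1 then (i, l.+1) :: r else [:: (i, 1%N), (j, l) & r]
  end = (i, 2%N) :: blocks_aux s i.+3).
by rewrite h eqxx.
Qed.

Lemma blocks_headT s i : exists L r, blocks_aux (true :: s) i = (i, L.+1) :: r.
Proof.
rewrite /=; case: (blocks_aux s i.+1) => [|[j l] r].
  by exists 0%N, [::].
case: ifP => _; first by exists l, r.
by exists 0%N, ((j, l) :: r).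
Qed.

Lemma blocks_consT s i L r : blocks_aux (true :: s) i.+1 = (i.+1, L) :: r ->
  blocks_aux [:: true, true & s] i = (i, L.+1) :: r.
Proof.
move=> h.
change (match blocks_aux (true :: s) i.+1 with
  | [::] => [:: (i, 1%N)]
  | (j, l) :: r => if j == i.+1 then (i, l.+1) :: r else [:: (i, 1%N), (j, l) & r]
  end = (i, L.+1) :: r).
by rewrite h eqxx.
Qed.

Lemma blocks_ttt s i : exists L r, blocks_aux [:: true, true, true & s] i = (i, L.+3) :: r.
Proof.
have [L [r h]] := blocks_headT s i.+2.
by exists L, r; apply: blocks_consT; apply: blocks_consT.
Qed.

Lemma blocks_tttf s :
  blocks [:: true, true, true, false & s] = (0%N, 3%N) :: blocks_aux s 4.
Proof. by rewrite /blocks (blocks_consT (blocks_ttf s 1)). Qed.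

Definition nadmB (bl : seq (nat * nat)) : bool :=
  all (fun kl => (kl.2 == 1%N) || (kl.2 == 2%N)) bl.

Definition wB (bl : seq (nat * nat)) : nat * nat :=
  (\sum_(kl <- bl) (block_wexp kl).1, \sum_(kl <- bl) (block_wexp kl).2)%N.

Definition Qp (p a b : nat) (bl : seq (nat * nat)) : bool :=
  (nadmB bl && (wB bl == (a, b))) && (size bl == p).

Lemma nadmB_map k bl : nadmB (map (shk k) bl) = nadmB bl.
Proof. by rewrite /nadmB all_map. Qed.

Lemma nadmB_cat u v : nadmB (u ++ v) = nadmB u && nadmB v.
Proof. by rewrite /nadmB all_cat. Qed.

Lemma wB_map k bl : nadmB bl ->
  wB (map (shk k) bl) = ((wB bl).1 + 2 * k * size bl, (wB bl).2 + 2 * k * size bl)%N.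
Proof.
rewrite /wB /=; elim: bl => [|[x l] bl IH] /=; first by rewrite !big_nil muln0.
move=> /andP [hl /IH [e1 e2]]; rewrite !big_cons e1 e2.
by case/orP: hl => /eqP -> /=; congr pair; lia.
Qed.

Lemma wB_cat u v : wB (u ++ v) = ((wB u).1 + (wB v).1, (wB u).2 + (wB v).2)%N.
Proof. by rewrite /wB !big_cat. Qed.

Lemma Qgen pre k bl p a b u v m : wB pre = (u, v) -> size pre = m -> nadmB pre ->
  Qp p a b (pre ++ map (shk k) bl) =
  [&& (m <= p)%N, (u + 2 * k * (p - m) <= a)%N, (v + 2 * k * (p - m) <= b)%N &
      Qp (p - m) (a - u - 2 * k * (p - m)) (b - v - 2 * k * (p - m)) bl].
Proof.
move=> hw hs hn; rewrite /Qp nadmB_cat hn nadmB_map /=.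
rewrite size_cat size_map hs.
case hb: (nadmB bl); last by rewrite /= !andbF.
rewrite wB_cat wB_map // hw.
case: (wB bl) => x y /=.
set t := (2 * k * _)%N.
case: (leqP m p) => hmp /=; last first.
  by apply/negbTE/negP => /andP [_ /eqP e]; lia.
case: (size bl =P (p - m)%N) => e; last first.
  rewrite !andbF; apply/negbTE/negP => /andP [_ /eqP e']; lia.
rewrite e !andbT !xpair_eqE.
have -> : (m + (p - m) == p) = true by apply/eqP; lia.
rewrite andbT.
apply/idP/idP.
  move=> /andP [/eqP e1 /eqP e2].
  by apply/and4P; split; try apply/eqP; lia.
by case/and4P => h1 h2 /eqP e1 /eqP e2; apply/andP; split; apply/eqP; lia.
Qed.

Definition Hn (n p a b : nat) : nat := count (fun s => Qp p a b (blocks s)) (bseqs n).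

Lemma bseqsS n : bseqs n.+1 = map (cons false) (bseqs n) ++ map (cons true) (bseqs n).
Proof. by []. Qed.

Lemma count_guard (T : Type) (P : pred T) (g : bool) l :
  count (fun x => g && P x) l = if g then count P l else 0.
Proof. by case: g => //=; rewrite count_pred0. Qed.

Lemma count_if (T : Type) (P Q : pred T) (g : bool) l :
  (forall x, P x = g && Q x) -> count P l = if g then count Q l else 0.
Proof. by move=> h; rewrite (eq_count h); case: g {h} => //=; rewrite count_pred0. Qed.

Lemma count5 (P : pred (seq bool)) m :
  count P (bseqs m.+4) =
  count (fun s => P (false :: s)) (bseqs m.+3) +
  count (fun s => P [:: true, false & s]) (bseqs m.+2) +
  count (fun s => P [:: true, true, false & s]) (bseqs m.+1) +
  count (fun s => P [:: true, true, true, false & s]) (bseqs m) +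
  count (fun s => P [:: true, true, true, true & s]) (bseqs m).
Proof.
rewrite bseqsS count_cat count_map -!addnA; congr addn.
rewrite bseqsS map_cat count_cat -!map_comp count_map; congr addn.
rewrite bseqsS map_cat count_cat -!map_comp count_map; congr addn.
by rewrite bseqsS map_cat count_cat -!map_comp !count_map.
Qed.

Lemma count3 (P : pred (seq bool)) m :
  count P (bseqs m.+3) =
  count (fun s => P (false :: s)) (bseqs m.+2) +
  count (fun s => P [:: true, false & s]) (bseqs m.+1) +
  count (fun s => P [:: true, true, false & s]) (bseqs m) +
  count (fun s => P [:: true, true, true & s]) (bseqs m).
Proof.
rewrite bseqsS count_cat count_map -!addnA; congr addn.
rewrite bseqsS map_cat count_cat -!map_comp count_map; congr addn.
by rewrite bseqsS map_cat count_cat -!map_comp !count_map.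
Qed.

Lemma wB1 x l : wB [:: (x, l)] = block_wexp (x, l).
Proof. by rewrite /wB !big_cons !big_nil !addn0; case: (block_wexp _). Qed.

Lemma QF p a b s : Qp p a b (blocks (false :: s)) =
  [&& (2 * p <= a)%N, (2 * p <= b)%N & Qp p (a - 2 * p) (b - 2 * p) (blocks s)].
Proof.
rewrite /blocks /= blocks_sh -[map _ _]/([::] ++ map (shk 1) (blocks s)).
have hw : wB [::] = (0, 0)%N by rewrite /wB !big_nil.
rewrite (@Qgen [::] 1 (blocks s) p a b 0 0 0 hw) //.
by rewrite !subn0 !add0n !muln1 /=.
Qed.

Lemma QTF p a b s : Qp p.+1 a b (blocks [:: true, false & s]) =
  [&& (4 * p + 2 <= a)%N, (4 * p <= b)%N & Qp p (a - (4 * p + 2)) (b - 4 * p) (blocks s)].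
Proof.
rewrite /blocks blocks_tf blocks_sh -[_ :: map _ _]/([:: (0, 1)] ++ map (shk 2) (blocks s)).
rewrite (@Qgen _ 2 (blocks s) p.+1 a b 2 0 1) //; last by rewrite wB1.
rewrite subn1 /= add0n.
have -> : (2 + 2 * 2 * p = 4 * p + 2)%N by lia.
have -> : (2 * 2 * p = 4 * p)%N by lia.
by rewrite subn0 -subnDA addnC.
Qed.

Lemma QTTF p a b s : Qp p.+1 a b (blocks [:: true, true, false & s]) =
  [&& (6 * p + 8 <= a)%N, (6 * p + 3 <= b)%N &
      Qp p (a - (6 * p + 8)) (b - (6 * p + 3)) (blocks s)].
Proof.
rewrite /blocks blocks_ttf blocks_sh -[_ :: map _ _]/([:: (0, 2)] ++ map (shk 3) (blocks s)).
rewrite (@Qgen _ 3 (blocks s) p.+1 a b 8 3 1) //; last by rewrite wB1.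
rewrite subn1 /=.
have -> : (8 + 2 * 3 * p = 6 * p + 8)%N by lia.
have -> : (3 + 2 * 3 * p = 6 * p + 3)%N by lia.
have -> : (a - 8 - 2 * 3 * p = a - (6 * p + 8))%N by lia.
by have -> : (b - 3 - 2 * 3 * p = b - (6 * p + 3))%N by lia.
Qed.

Lemma QTTT p a b s : Qp p a b (blocks [:: true, true, true & s]) = false.
Proof.
have [L [r h]] := blocks_ttt s 0.
by rewrite /blocks h /Qp /nadmB /=.

Qed.

Lemma Hn_rec n p a b : Hn n.+3 p.+1 a b =
  (if ((4 * p + 2 <= a) && (4 * p <= b))%N then Hn n.+1 p (a - (4 * p + 2)) (b - 4 * p) else 0) +
  (if ((6 * p + 8 <= a) && (6 * p + 3 <= b))%N then Hn n p (a - (6 * p + 8)) (b - (6 * p + 3)) else 0) +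
  (if ((2 * p + 2 <= a) && (2 * p + 2 <= b))%N then Hn n.+2 p.+1 (a - (2 * p + 2)) (b - (2 * p + 2)) else 0).
Proof.
rewrite /Hn count3.
rewrite (count_if _ (fun s => etrans (QF p.+1 a b s) (andbA _ _ _))).
rewrite (count_if _ (fun s => etrans (QTF p a b s) (andbA _ _ _))).
rewrite (count_if _ (fun s => etrans (QTTF p a b s) (andbA _ _ _))).
rewrite (eq_count (QTTT _ _ _)) count_pred0 addn0.
rewrite (_ : (2 * p.+1 = 2 * p + 2)%N); last by lia.
by rewrite -addnA addnC.
Qed.

Lemma count_nil n : count (fun s => blocks s == [::]) (bseqs n) = 1%N.
Proof.
elim: n => [|n IH] //.
rewrite bseqsS count_cat !count_map.
rewrite (eq_count (a2 := fun s => blocks s == [::])); last first.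
  by move=> s; rewrite /preim /= [blocks (false :: s)]/blocks /= blocks_sh; case: (blocks s).
rewrite IH (eq_count (a2 := pred0)) ?count_pred0 // => s /=.
by have [L [r h]] := blocks_headT s 0; rewrite /blocks h.
Qed.

Lemma Hn0 n a b : Hn n 0 a b = ((a == 0) && (b == 0))%N.
Proof.
rewrite /Hn (count_if (g := (a == 0) && (b == 0))
   (Q := fun s => blocks s == [::])); last first.
  move=> s; rewrite /Qp.
  case: (blocks s) => [|x r] /=; last by rewrite andbF andbF.
  rewrite /nadmB /wB !big_nil /= xpair_eqE !andbT.
  by rewrite ![0%N == _]eq_sym.
by rewrite count_nil; case: (_ && _).
Qed.

Lemma Hn2 p b : Hn 2 p.+1 0 b = 0%N.
Proof.
rewrite /Hn /= /blocks /= /Qp /nadmB /wB /=.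
rewrite /Hn /= /blocks /= /Qp /nadmB /wB /= !big_cons !big_nil /= !xpair_eqE /=.
by rewrite andbF.
Qed.

Lemma size_blocks s i : (size (blocks_aux s i) <= size s)%N.
Proof.
elim: s i => [|[] s IH] i //=; last by apply: leq_trans (IH _) _.
have := IH i.+1.
case: (blocks_aux s i.+1) => [|[j l] r] //= h.
by case: ifP => _ /=; [apply: leq_trans h _ | ].
Qed.

Lemma count_split (T : eqType) (P : pred T) (f : T -> nat) N (l : seq T) :
  (forall x, x \in l -> f x < N)%N ->
  count P l = \sum_(p < N) count (fun x => P x && (f x == p)) l.
Proof.
elim: l => [|x l IH] h /=; first by rewrite big1.
rewrite big_split /= -IH; last by move=> y hy; apply: h; rewrite inE hy orbT.
congr addn.
have hx : (f x < N)%N by apply: h; rewrite inE eqxx.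
rewrite (bigD1 (Ordinal hx)) //= eqxx andbT big1 ?addn0 // => i hi.
case: (f x =P i) => e; last by rewrite andbF.
by move: hi; rewrite -(inj_eq val_inj) /= e eqxx.
Qed.

Lemma adm_shift k bl : (0 < k)%N -> all admissible_block (map (shk k) bl) = nadmB bl.
Proof.
move=> hk; rewrite all_map /nadmB; apply: eq_all => [[x l]] /=.
rewrite /admissible_block /=.
have -> : (x + k == 0)%N = false by apply/negbTE; lia.
by rewrite andbF orbF.
Qed.

Lemma blocks_tttt s : exists L r, blocks [:: true, true, true, true & s] = (0%N, L.+4) :: r.
Proof.
have [L [r h]] := blocks_headT s 3.
by exists L, r; apply: blocks_consT; apply: blocks_consT; apply: blocks_consT.
Qed.

Definition Npred (a b : nat) (s : seq bool) : bool := nadmB (blocks s) && (wexp s == (a, b)).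
Definition Apred (a b : nat) (s : seq bool) : bool := admissible s && (wexp s == (a, b)).

Lemma AF a b s : Apred a b (false :: s) = Npred a b (false :: s).
Proof.
rewrite /Apred /Npred /admissible; congr andb.
by rewrite /blocks /= blocks_sh adm_shift // nadmB_map.
Qed.

Lemma ATF a b s : Apred a b [:: true, false & s] = Npred a b [:: true, false & s].
Proof.
rewrite /Apred /Npred /admissible; congr andb.
by rewrite /blocks blocks_tf blocks_sh /= adm_shift // /nadmB /= all_map.
Qed.

Lemma ATTF a b s : Apred a b [:: true, true, false & s] = Npred a b [:: true, true, false & s].
Proof.
rewrite /Apred /Npred /admissible; congr andb.
by rewrite /blocks blocks_ttf blocks_sh /= adm_shift // /nadmB /= all_map.
Qed.

Lemma NTTT a b s : Npred a b [:: true, true, true & s] = false.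
Proof.
have [L [r h]] := blocks_ttt s 0.
by rewrite /Npred /blocks h /nadmB /=.
Qed.

Lemma ATTTT a b s : Apred a b [:: true, true, true, true & s] = false.
Proof.
have [L [r h]] := blocks_tttt s.
by rewrite /Apred /admissible h /= /admissible_block /=.
Qed.

Lemma ATTTF a b p s :
  Apred a b [:: true, true, true, false & s] && (size (blocks s) == p) =
  ((8 * p + 12 <= a) && (8 * p + 5 <= b))%N &&
    Qp p (a - (8 * p + 12)) (b - (8 * p + 5)) (blocks s).
Proof.
rewrite /Apred /admissible /wexp -/(wB _) blocks_tttf blocks_sh.
rewrite -[_ :: map _ _]/([:: (0, 3)] ++ map (shk 4) (blocks s)) wB_cat wB1.
case hb: (nadmB (blocks s)); last first.
  by rewrite /= adm_shift // /Qp hb /= !andbF.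
rewrite wB_map //.
rewrite /Qp hb.
case: (wB (blocks s)) => x y /=.
rewrite adm_shift // hb /=.
case: (size (blocks s) =P p) => e; last by rewrite !andbF.
rewrite e !andbT !xpair_eqE.
apply/idP/idP.
  move=> /andP [/eqP e1 /eqP e2].
  by apply/and3P; split; [apply/andP; split | apply/eqP | apply/eqP]; lia.
by case/and3P => /andP [h1 h2] /eqP e1 /eqP e2; apply/andP; split; apply/eqP; lia.
Qed.

Lemma Kn_dec m a b :
  count (Apred a b) (bseqs m.+4) =
  (\sum_(p < m.+4.+1) Hn m.+4 p a b +
   \sum_(p < m.+1) (if ((8 * p + 12 <= a) && (8 * p + 5 <= b))%N
                    then Hn m p (a - (8 * p + 12)) (b - (8 * p + 5)) else 0))%N.
Proof.
have eN : count (Npred a b) (bseqs m.+4) = \sum_(p < m.+4.+1) Hn m.+4 p a b.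
  rewrite (@count_split _ _ (fun s => size (blocks s)) m.+4.+1); last first.
    by move=> x; rewrite mem_bseqs => /eqP <-; rewrite ltnS size_blocks.
  by apply: eq_bigr => p _; apply: eq_count => s.
have eT : count (fun s => Apred a b [:: true, true, true, false & s]) (bseqs m) =
   \sum_(p < m.+1) (if ((8 * p + 12 <= a) && (8 * p + 5 <= b))%N
                    then Hn m p (a - (8 * p + 12)) (b - (8 * p + 5)) else 0).
  rewrite (@count_split _ _ (fun s => size (blocks s)) m.+1); last first.
    by move=> x; rewrite mem_bseqs => /eqP <-; rewrite ltnS size_blocks.
  by apply: eq_bigr => p _; apply: count_if => s; rewrite ATTTF.
rewrite -eN -eT !count5.
rewrite (eq_count (AF a b)) (eq_count (ATF a b)) (eq_count (ATTF a b)).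
rewrite (eq_count (ATTTT a b)) count_pred0 addn0.
rewrite (eq_count (a1 := fun s => Npred a b [:: true, true, true, false & s])
  (fun s => NTTT a b (false :: s))).
rewrite (eq_count (a1 := fun s => Npred a b [:: true, true, true, true & s])
  (fun s => NTTT a b (true :: s))).
rewrite !count_pred0 !addn0.
by [].
Qed.


Lemma Tp_eval p a b : Tp p a b = sh (2 * p ^ 2) (2 * p * (p - 1)) (Pp p) a b.
Proof. by rewrite /Tp smul_mono. Qed.

Lemma Tp_zero p a b : (a < 2 * p ^ 2)%N -> Tp p a b = 0%R.
Proof. by move=> h; rewrite Tp_eval /sh leqNgt h. Qed.

Lemma Tp0 a b : Tp 0 a b = (((a == 0) && (b == 0))%N)%:R%R.
Proof. by rewrite /Tp /Pp big_geq // smuls1. Qed.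

Lemma Tp_recE p a b : Tp p.+1 a b =
  (sh (4 * p + 2) (4 * p) (Tp p) a b + sh (6 * p + 8) (6 * p + 3) (Tp p) a b +
   sh (2 * p + 2) (2 * p + 2) (Tp p.+1) a b)%R.
Proof. by rewrite {1}Tp_rec. Qed.

Lemma HT n p a b : (a + 2 <= n)%N -> ((Hn n p a b)%:Z)%R = Tp p a b.
Proof.
elim/ltn_ind: n p a b => n IH p a b ha.
case: p => [|p].
  by rewrite Hn0 Tp0; case: (_ && _).
case: n IH ha => [|[|[|n]]] IH ha; try lia.
  have -> : a = 0%N by lia.
  by rewrite Hn2 Tp_zero //; lia.
rewrite Hn_rec Tp_recE !PoszD /sh.
congr (_ + _ + _)%R.
- case: ifP => // /andP [h1 h2]; apply: IH; lia.
- case: ifP => // /andP [h1 h2]; apply: IH; lia.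
- case: ifP => // /andP [h1 h2]; apply: IH; lia.
Qed.

Local Open Scope ring_scope.

Lemma sum_trunc (f : nat -> int) N M : (M <= N)%N ->
  (forall p, (M <= p)%N -> f p = 0) -> \sum_(p < N) f p = \sum_(p < M) f p.
Proof.
move=> hMN hf; rewrite -(subnKC hMN); elim: (N - M)%N => [|k IH]; first by rewrite addn0.
by rewrite addnS big_ord_recr /= IH hf ?addr0 // leq_addr.
Qed.

Lemma Tp_big p a b : (a < p)%N -> Tp p a b = 0.
Proof. move=> h; apply: Tp_zero; rewrite expnS expn1; nia. Qed.

Lemma shTp_big p a b c d : (a < p)%N -> sh c d (Tp p) a b = 0.
Proof. by move=> h; rewrite /sh; case: ifP => // _; apply: Tp_big; lia. Qed.

Lemma Kpartial_eval P a b : Kpartial P a b = \sum_(p < P) Kterm p a b.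
Proof.
rewrite /Kpartial.
by apply: (big_morph (fun F : series => F a b)) => //.
Qed.

Lemma Kterm_eval p a b : Kterm p a b = Tp p a b + sh (8 * p + 12) (8 * p + 5) (Tp p) a b.
Proof. by rewrite Kterm_eq. Qed.

Theorem mainTheorem11 :
  exists K : series, coef_conv Kn K /\ coef_conv Kpartial K.
Proof.
exists (fun a b => \sum_(p < a.+1) Kterm p a b); split => a b.
  exists (a + 4)%N => n hn.
  have [m em] : exists m, n = m.+4.
    by exists (n - 4)%N; rewrite -addn4 subnK // (leq_trans _ hn) // leq_addl.
  subst n.
  have hm : (a <= m)%N by lia.
  rewrite Kn_count.
  have -> : count (fun s => admissible s && (wexp s == (a, b))) (bseqs m.+4) =
            count (Apred a b) (bseqs m.+4) by [].
  rewrite Kn_dec PoszD -!natz !natr_sum.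
  rewrite (eq_bigr (fun p : 'I_m.+4.+1 => Tp p a b)); last first.
    by move=> p _; rewrite natz HT //; lia.
  rewrite (eq_bigr (fun p : 'I_m.+1 => sh (8 * p + 12) (8 * p + 5) (Tp p) a b)); last first.
    move=> p _; rewrite /sh; case: ifP => [/andP [h1 h2]|] //.
    by rewrite natz HT //; lia.
  rewrite (@sum_trunc (fun p => Tp p a b) _ a.+1); last 2 first.
  - lia.
  - by move=> p hp; apply: Tp_big.
  rewrite (@sum_trunc (fun p : nat => sh (8 * p + 12) (8 * p + 5) (Tp p) a b) _ a.+1); last 2 first.
  - lia.
  - by move=> p hp; apply: shTp_big.
  by rewrite -big_split; apply: eq_bigr => p _; rewrite Kterm_eval.
exists a.+1 => n hn.
rewrite Kpartial_eval (@sum_trunc (fun p => Kterm p a b) _ a.+1) //.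
by move=> p hp; rewrite Kterm_eval Tp_big // shTp_big.
Qed.
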